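(* Let $n\ge2$ and let $w_{12},w_{13},w_{23}$ be real numbers. For any sequence $S\in\mathcal{R}(n;1)$ (a minimal-length sequence transferring all $n$ disks from Peg 1 back to Peg 1 in which the largest disk is moved), played alternately by Anh (odd-numbered moves) and Bao (even-numbered moves), the total score (Anh's points minus Bao's points) is $\Delta_{11}(n)=3w_{23}-w_{12}-w_{13}$ if $n$ is odd, and $\Delta_{11}(n)=w_{12}+w_{13}-w_{23}$ if $n$ is even.
   Context: Tower of Hanoi on three pegs (labeled 1, 2, 3) with disks $1<2<\dots<n$ ordered by size; a legal move transfers the top disk of one peg to a different peg that is empty or has a larger top disk. A move between Peg $i$ and Peg $j$ (either direction) is a move along edge $\{i,j\}$ and earns the mover the real weight $w_{ij}=w_{ji}$. The minimal algorithm $\mathcal{M}(n;i\to j)$ ($i\ne j$, $k$ the third peg) is defined recursively: $\mathcal{M}(1;i\to j)$ is the single move of disk 1 from $i$ to $j$; for $n\ge2$, $\mathcal{M}(n;i\to j)$ is $\mathcal{M}(n-1;i\to k)$, then the move of disk $n$ from $i$ to $j$, then $\mathcal{M}(n-1;k\to j)$. For a peg $i$ and $n\ge2$, the set $\mathcal{R}(n;i)$ of minimal return sequences (each of length $2^{n+1}-1$) is defined recursively: for $\{i,a,b\}=\{1,2,3\}$ (either labeling of the two other pegs as $a,b$), $\mathcal{R}(n;i)$ contains the sequence $\mathcal{M}(n-1;i\to b)$, disk $n$ from $i$ to $a$, $\mathcal{M}(n-1;b\to i)$, disk $n$ from $a$ to $b$, $\mathcal{M}(n-1;i\to a)$, disk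 $n$ from $b$ to $i$, $\mathcal{M}(n-1;a\to i)$; and, if $n\ge3$, also every sequence $\mathcal{M}(n-1;i\to b)$, disk $n$ from $i$ to $a$, $T$, disk $n$ from $a$ to $i$, $\mathcal{M}(n-1;b\to i)$, where $T\in\mathcal{R}(n-1;b)$ (acting on disks $1,\dots,n-1$). When a move sequence is played in the two-player game, Anh makes moves $1,3,5,\dots$ and Bao makes moves $2,4,\dots$, each earning the weight of the moves they make. *)

(* Defs.v *)
From Stdlib Require Import Reals List.
Import ListNotations.
Open Scope R_scope.

Inductive peg : Type := P1 | P2 | P3.

(* the third peg, different from i and j (meaningful when i <> j) *)
Definition third (i j : peg) : peg :=
  match i, j with
  | P1, P2 | P2, P1 => P3
  | P1, P3 | P3, P1 => P2
  | P2, P3 | P3, P2 => P1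
  | P1, P1 => P2 | P2, P2 => P3 | P3, P3 => P1
  end.

(* a move: (disk, source peg, target peg) *)
Definition move : Type := (nat * peg * peg)%type.

Fixpoint hanoi (n : nat) (i j : peg) : list move :=
  match n with
  | O => []
  | S m => hanoi m i (third i j) ++ (S m, i, j) :: hanoi m (third i j) j
  end.

Definition all_distinct (i a b : peg) : Prop := i <> a /\ i <> b /\ a <> b.

Inductive minret : nat -> peg -> list move -> Prop :=
| minret_base : forall n i a b,
    (2 <= n)%nat -> all_distinct i a b ->
    minret n i
      (hanoi (n - 1) i b ++ (n, i, a) :: hanoi (n - 1) b i ++
       (n, a, b) :: hanoi (n - 1) i a ++ (n, b, i) :: hanoi (n - 1) a i)
| minret_rec : forall n i a b T,
    (3 <= n)%nat -> all_distinct i a b -> minret (n - 1) b T ->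
    minret n i
      (hanoi (n - 1) i b ++ (n, i, a) :: T ++ (n, a, i) :: hanoi (n - 1) b i).

(* weight of the edge {p,q}, symmetric; (p = q never occurs) *)
Definition edge_w (w12 w13 w23 : R) (p q : peg) : R :=
  match p, q with
  | P1, P2 | P2, P1 => w12
  | P1, P3 | P3, P1 => w13
  | P2, P3 | P3, P2 => w23
  | _, _ => 0
  end.

Definition move_w (w12 w13 w23 : R) (m : move) : R :=
  match m with (_, p, q) => edge_w w12 w13 w23 p q end.

(* Anh (moves 1,3,5,...) points minus Bao (moves 2,4,...) points. *)
Fixpoint score (w12 w13 w23 : R) (s : list move) : R :=
  match s with
  | [] => 0
  | m :: s' => move_w w12 w13 w23 m - score w12 w13 w23 s'
  end.

(* Main.v *)
Require Import Defs.
From Stdlib Require Import Reals List Lra Lia.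
Import ListNotations.
Open Scope R_scope.

Lemma score_app w12 w13 w23 l1 l2 :
  score w12 w13 w23 (l1 ++ l2) =
  score w12 w13 w23 l1 + (-1) ^ (length l1) * score w12 w13 w23 l2.
Proof.
  induction l1 as [|a l1 IH]; simpl. ring. rewrite IH. ring.
Qed.

Fixpoint L (m : nat) : nat := match m with O => O | S m => S (2 * L m) end.

Lemma hanoi_len m i j : length (hanoi m i j) = L m.
Proof.
  revert i j; induction m; intros i j; simpl; auto.
  rewrite length_app; simpl; rewrite !IHm. lia.
Qed.

Lemma score_cons w12 w13 w23 a l : score w12 w13 w23 (a :: l) = move_w w12 w13 w23 a - score w12 w13 w23 l.
Proof. reflexivity. Qed.

Lemma powL m : (-1) ^ (L (S m)) = -1.
Proof. exact (pow_1_odd (L m)). Qed.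

Lemma odd_S p : Nat.odd (S p) = negb (Nat.odd p).
Proof. rewrite Nat.odd_succ, <- Nat.negb_odd. reflexivity. Qed.

Lemma hanoi_score w12 w13 w23 m : forall i j, i <> j ->
  score w12 w13 w23 (hanoi (S m) i j) =
  if Nat.odd (S m) then edge_w w12 w13 w23 i j
  else w12 + w13 + w23 - 2 * edge_w w12 w13 w23 i j.
Proof.
  induction m; intros i j Hij.
  - simpl. destruct i, j; simpl; try congruence; ring.
  - change (hanoi (S (S m)) i j) with
      (hanoi (S m) i (third i j) ++ (S (S m), i, j) :: hanoi (S m) (third i j) j).
    rewrite score_app, hanoi_len, powL.
    rewrite score_cons.
    rewrite !IHm by (destruct i, j; simpl; congruence).
    rewrite (odd_S (S m)), (odd_S m).
    destruct (Nat.odd m); destruct i, j; simpl; try congruence; lra.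
Qed.

Lemma minret_len n i l : minret n i l -> exists k, length l = S (2 * k)%nat.
Proof.
  induction 1.
  - rewrite !length_app; simpl; rewrite !length_app; simpl.
    rewrite !hanoi_len. exists (2 * L (n - 1) + 1)%nat. rewrite length_app; simpl; rewrite !hanoi_len. lia.
  - destruct IHminret as [k Hk].
    rewrite !length_app; simpl; rewrite !length_app; simpl.
    rewrite !hanoi_len, Hk. exists (L (n - 1) + k + 1)%nat. lia.
Qed.

Definition opp w12 w13 w23 (i : peg) : R :=
  match i with P1 => w23 | P2 => w13 | P3 => w12 end.

Lemma gen w12 w13 w23 n i l : minret n i l ->
  score w12 w13 w23 l =
  if Nat.odd n then 4 * opp w12 w13 w23 i - (w12 + w13 + w23)
  else (w12 + w13 + w23) - 2 * opp w12 w13 w23 i.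
Proof.
  induction 1 as [n i a b Hn [H1 [H2 H3]] | n i a b T Hn [H1 [H2 H3]] HT IH].
  - destruct n as [|[|p]]; try lia.
    replace (S (S p) - 1)%nat with (S p) by lia.
    rewrite score_app, hanoi_len; rewrite powL. rewrite score_cons.
    rewrite score_app, hanoi_len; rewrite powL. rewrite score_cons.
    rewrite score_app, hanoi_len; rewrite powL. rewrite score_cons.
    rewrite !hanoi_score by congruence.
    rewrite !odd_S.
    destruct (Nat.odd p); destruct i, a, b; simpl; try congruence; lra.
  - destruct n as [|[|[|p]]]; try lia.
    replace (S (S (S p)) - 1)%nat with (S (S p)) in * by lia.
    destruct (minret_len _ _ _ HT) as [k Hk].
    rewrite score_app, hanoi_len; rewrite powL. rewrite score_cons.
    rewrite score_app, Hk, pow_1_odd. rewrite score_cons.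
    rewrite IH, !hanoi_score by congruence.
    rewrite !odd_S.
    destruct (Nat.odd p); destruct i, a, b; simpl; try congruence; lra.
Qed.

Theorem lemma2 (n : nat) (w12 w13 w23 : R) (S : list move) :
  (2 <= n)%nat -> minret n P1 S ->
  score w12 w13 w23 S =
    (if Nat.odd n then 3 * w23 - w12 - w13 else w12 + w13 - w23).
Proof.
  intros _ H. rewrite (gen w12 w13 w23 _ _ _ H). simpl.
  destruct (Nat.odd n); lra.
Qed.
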